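(* In the setting described in the context, fix $n\ge 1$, $\tau>0$ and a point ${\bf y}\in\Omega$, and assume that the $nm\times nm$ data-driven mass matrix ${\bf M}$ is symmetric positive definite with block Cholesky factorization ${\bf M}={\bf R}^T{\bf R}$, ${\bf R}$ block upper triangular. Then for every $j=0,\ldots,n-1$ the estimated internal wave evaluated at the sensor locations and at time $t_j=j\tau$ satisfies \[ \big(g(t_j,{\bf x}_1;{\bf y}),\ldots,g(t_j,{\bf x}_m;{\bf y})\big)={\bf V}_o({\bf y})\,{\bf R}\,{\bf e}_j , \] where ${\bf e}_j\in\mathbb{R}^{nm\times m}$ is the $(j+1)$-th column block (of width $m$) of the $nm\times nm$ identity matrix.
   Context: Let $\Omega\subset\mathbb{R}^d$ be a bounded domain whose boundary is split into an ''accessible'' part $\partial\Omega_{\rm ac}$ (homogeneous Neumann condition) and an ''inaccessible'' part $\partial\Omega_{\rm inac}=\partial\Omega\setminus\partial\Omega_{\rm ac}$ (homogeneous Dirichlet condition). For a positive wave speed $c({\bf x})$ let $A(c)=-c({\bf x})\Delta\big[c({\bf x})\,\cdot\,\big]$ with these boundary conditions; it is self-adjoint and positive on $L^2(\Omega)$, with eigenvalues $0<\theta_1\le\theta_2\le\cdots\to\infty$ and $L^2(\Omega)$-orthonormal eigenfunctions $y_l$. Functions of $A(c)$ are defined spectrally: $h(A(c))\phi=\sum_l h(\theta_l)\,y_l\,\langle y_l,\phi\rangle$, and for a Dirac mass $h(A(c))\delta_{\bf z}({\bf x})=\sum_l h(\theta_l)y_l({\bf x})y_l({\bf z})$. The pulse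 $f(t)$ is real, even, supported in a short interval, with Fourier transform $\hat f(\omega)=\int f(t)e^{i\omega t}dt\ge 0$ that is band-limited (so all the spectral sums involving $\hat f$ are finite). Sensors are at points ${\bf x}_1,\ldots,{\bf x}_m\in\Omega$. Sensor functions: $\delta^f_{{\bf x}_s}=\hat f^{1/2}(\sqrt{A(c)})\delta_{{\bf x}_s}$, grouped in the row vector $\boldsymbol\delta^f({\bf x})=(\delta^f_{{\bf x}_1}({\bf x}),\ldots,\delta^f_{{\bf x}_m}({\bf x}))$. Snapshots: ${\bf u}_j({\bf x})=\cos(j\tau\sqrt{A(c)})\boldsymbol\delta^f({\bf x})$ ($m$-dimensional row vectors), ${\bf U}({\bf x})=({\bf u}_0({\bf x}),\ldots,{\bf u}_{n-1}({\bf x}))$. Data matrices: ${\bf D}_j=\int_\Omega\boldsymbol\delta^f({\bf x})^T{\bf u}_j({\bf x})\,d{\bf x}\in\mathbb{R}^{m\times m}$, $j=0,\ldots,2n-1$ (their $(r,s)$ entries are the even-in-time extension of the wave emitted at ${\bf x}_s$ and recorded at ${\bf x}_r$ at time $j\tau$). The mass matrix ${\bf M}\in\mathbb{R}^{nm\times nm}$ has $m\times m$ blocks ${\bf M}_{j,l}=\tfrac12({\bf D}_{j+l}+{\bf D}_{|j-l|})$, $j,l=0,\ldots,n-1$ (equivalently ${\bf M}=\int_\Omega{\bf U}^T{\bf U}\,d{\bf x}$). With ${\bf M}={\bf R}^T{\bf R}$, the orthonormal snapshots are ${\bf V}({\bf x})={\bf U}({\bf x}){\bf R}^{-1}=({\bf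 v}_0({\bf x}),\ldots,{\bf v}_{n-1}({\bf x}))$. A known reference wave speed $c_o({\bf x})$ gives, by the same construction with $c$ replaced by $c_o$, snapshots ${\bf U}_o$, Cholesky factor ${\bf R}_o$ of its mass matrix, and orthonormal snapshots ${\bf V}_o({\bf x})={\bf U}_o({\bf x}){\bf R}_o^{-1}$. The ROM point spread function is $\delta^{\rm ROM}_{\bf y}({\bf x})={\bf V}({\bf x}){\bf V}_o({\bf y})^T=\sum_{j=0}^{n-1}{\bf v}_j({\bf x}){\bf v}_{o,j}({\bf y})^T$, and the estimated internal wave is $g(t,{\bf x};{\bf y})=\cos(t\sqrt{A(c)})\,\hat f^{1/2}(\sqrt{A(c)})\,\delta^{\rm ROM}_{\bf y}({\bf x})$. *)

(* Defs.v *)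
From HB Require Import structures.
From mathcomp Require Import all_boot all_order all_algebra.
From mathcomp Require Import all_classical all_reals all_analysis.
Set Implicit Arguments. Unset Strict Implicit. Unset Printing Implicit Defensive.
Import Order.TTheory GRing.Theory Num.Theory.
Local Open Scope ring_scope.

(* Spatial domain Omega: a measurable set in a measure space (T, mu)
   (for the paper: T = R^d, mu = Lebesgue measure).
   The operator A(c) is represented by its spectral data:
   eigenvalues theta_l and L^2(Omega)-orthonormal eigenfunctions phi_l.
   Nb is an index beyond which fhat(sqrt theta_l) = 0 (band-limitation),
   so every spectral sum involving fhat is the finite sum over l < Nb. *)

Section Spectral.
Variables (R : realType) (disp : measure_display) (T : measurableType disp).
Variable (mu : {measure set T -> \bar R}) (Om : set T).

Definition l2ip (f g : T -> R) : R := Rintegral mu Om (fun x => f x * g x).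

Variables (Nb : nat) (theta : nat -> R) (phi : nat -> T -> R).

(* h(A) delta_z (x) = sum_l h(theta_l) y_l(x) y_l(z) *)
Definition spec_dirac (h : R -> R) (z : T) : T -> R :=
  fun x => \sum_(l < Nb) h (theta l) * phi l x * phi l z.

Definition spec_apply (h : R -> R) (f : T -> R) : T -> R :=
  fun x => \sum_(l < Nb) h (theta l) * phi l x * l2ip (phi l) f.

Variable fhat : R -> R.
Definition sqfhat (w : R) : R := Num.sqrt (fhat (Num.sqrt w)).
Definition cosf (t : R) (w : R) : R := cos (t * Num.sqrt w).

Variables (m : nat) (xs : 'I_m -> T) (tau : R).

Definition sensor_fun (s : 'I_m) : T -> R := spec_dirac sqfhat (xs s).
Definition deltaf (x : T) : 'rV[R]_m := \row_s sensor_fun s x.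
Definition snap (j : nat) (x : T) : 'rV[R]_m :=
  \row_s spec_apply (cosf (j%:R * tau)) (sensor_fun s) x.
Definition data (j : nat) : 'M[R]_m :=
  \matrix_(r, s) Rintegral mu Om (fun x => deltaf x 0 r * snap j x 0 s).

Variable n : nat.
Definition Umat (x : T) : 'rV[R]_(\sum_(j < n) m) := \mxrow_(j < n) snap j x.
(* mass matrix, blocks M_{j,l} = (D_{j+l} + D_{|j-l|}) / 2 ;
   (j - l + (l - j))%N is |j - l| with truncated subtraction *)
Definition mass : 'M[R]_(\sum_(j < n) m) :=
  \mxblock_(j < n, l < n)
     ((2%:R)^-1 *: (data (j + l)%N + data (j - l + (l - j))%N)).
End Spectral.

Section Matrices.
Variables (R : realType) (m n : nat).
Local Notation N := (\sum_(j < n) m).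

Definition sym_posdef (M : 'M[R]_N) : Prop :=
  M^T = M /\ forall v : 'rV[R]_N, v != 0 -> 0 < (v *m M *m v^T) 0 0.

Definition block_upper (Rm : 'M[R]_N) : Prop :=
  forall j l : 'I_n, (l < j)%N ->
    submxblock (p_ := fun _ : 'I_n => m) (q_ := fun _ : 'I_n => m) Rm j l = 0.

Definition eblock (j : 'I_n) : 'M[R]_(N, m) :=
  submxrow (q_ := fun _ : 'I_n => m) (1%:M : 'M[R]_N) j.
End Matrices.

Section ROM.
Variables (R : realType) (disp : measure_display) (T : measurableType disp).
Variable (mu : {measure set T -> \bar R}) (Om : set T).
Variables (Nb : nat) (theta : nat -> R) (phi : nat -> T -> R).
Variables (Nbo : nat) (thetao : nat -> R) (phio : nat -> T -> R).
Variables (fhat : R -> R) (m : nat) (xs : 'I_m -> T) (tau : R) (n : nat).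
Variables (Rm Rmo : 'M[R]_(\sum_(j < n) m)).

Definition Vmat (x : T) : 'rV[R]_(\sum_(j < n) m) :=
  Umat mu Om Nb theta phi fhat xs tau n x *m invmx Rm.
Definition Vomat (y : T) : 'rV[R]_(\sum_(j < n) m) :=
  Umat mu Om Nbo thetao phio fhat xs tau n y *m invmx Rmo.
Definition psf_rom (y x : T) : R := (Vmat x *m (Vomat y)^T) 0 0.
Definition gwave (t : R) (x y : T) : R :=
  spec_apply mu Om Nb theta phi (fun w => cosf t w * sqfhat fhat w) (psf_rom y) x.
End ROM.

Definition eigen_data (R : realType) (disp : measure_display) (T : measurableType disp)
  (mu : {measure set T -> \bar R}) (Om : set T)
  (theta : nat -> R) (phi : nat -> T -> R) : Prop :=
  [/\ forall l, 0 < theta l,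
      {homo theta : a b / (a <= b)%N >-> a <= b},
      (theta @ \oo --> +oo)%classic,
      forall l, measurable_fun Om (phi l)
    & forall l k, mu.-integrable Om (fun x => (phi l x * phi k x)%:E) /\
        l2ip mu Om (phi l) (phi k) = (l == k)%:R].

(* Main.v *)
Require Import Defs.
From HB Require Import structures.
From mathcomp Require Import all_boot all_order all_algebra.
From mathcomp Require Import all_classical all_reals all_analysis.
From mathcomp Require Import ring lra zify.
Import Order.TTheory GRing.Theory Num.Theory.
Local Open Scope ring_scope.

Section Int.
Variables (R : realType) (disp : measure_display) (T : measurableType disp).
Variable (mu : {measure set T -> \bar R}) (Om : set T).
Hypothesis mOm : measurable Om.

Lemma Rint_big (I : Type) (s : seq I) (h : I -> T -> R) :
  (forall i, mu.-integrable Om (EFin \o h i)) ->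
  mu.-integrable Om (EFin \o (fun x => \sum_(i <- s) h i x)) /\
  Rintegral mu Om (fun x => \sum_(i <- s) h i x) = \sum_(i <- s) Rintegral mu Om (h i).
Proof.
move=> hi; elim: s => [|i s [ih1 ih2]].
  split.
    apply: (eq_integrable mOm _ _ _ (integrable0 mu Om)) => x _ /=; by rewrite big_nil.
  rewrite big_nil.
  have -> : Rintegral mu Om (fun x => \sum_(i <- [::]) h i x) = Rintegral mu Om (fun _ => 0).
    by apply: eq_Rintegral => x _; rewrite big_nil.
  by rewrite Rintegral_cst // mul0r.
split.
  apply: (eq_integrable mOm _ _ _ (integrableD mOm (hi i) ih1)) => x _ /=.
  by rewrite big_cons EFinD.
rewrite big_cons -ih2 -RintegralD //.
by apply: eq_Rintegral => x _; rewrite big_cons.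
Qed.

Variables (Nb : nat) (phi : nat -> T -> R).
Hypothesis horth : forall l k, mu.-integrable Om (fun x => (phi l x * phi k x)%:E) /\
        l2ip mu Om (phi l) (phi k) = ((l : nat) == k)%:R.

Lemma int_cpp c l k : mu.-integrable Om (EFin \o (fun x => c * (phi l x * phi k x))).
Proof.
apply: (eq_integrable mOm _ _ _ (integrableZl mOm c (horth l k).1)) => x _ /=.
by rewrite EFinM.
Qed.

Lemma Rint_cpp c l k : Rintegral mu Om (fun x => c * (phi l x * phi k x)) = c * ((l : nat) == k)%:R.
Proof.
rewrite RintegralZl //; first by rewrite -(horth l k).2.
exact: (horth l k).1.
Qed.

Lemma sum_delta (F : 'I_Nb -> R) (k : 'I_Nb) : \sum_(l < Nb) F l * ((l : nat) == k)%:R = F k.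
Proof.
rewrite (bigD1 k) //= eqxx mulr1 big1 ?addr0 // => i ik.
by rewrite (_ : (i : nat) == k = false) ?mulr0 //; apply/negbTE.
Qed.

Lemma sum_delta' (F : 'I_Nb -> R) (k : 'I_Nb) : \sum_(l < Nb) F l * ((k : nat) == l)%:R = F k.
Proof. by under eq_bigr do rewrite eq_sym; rewrite sum_delta. Qed.

Lemma Rint_comb2 (a b : 'I_Nb -> R) :
  Rintegral mu Om (fun x => (\sum_(l < Nb) phi l x * a l) * (\sum_(k < Nb) phi k x * b k))
  = \sum_(l < Nb) a l * b l.
Proof.
have E : forall x, (\sum_(l < Nb) phi l x * a l) * (\sum_(k < Nb) phi k x * b k) =
   \sum_(l < Nb) \sum_(k < Nb) (a l * b k) * (phi l x * phi k x).
  move=> x; rewrite mulr_suml; apply: eq_bigr => l _; rewrite mulr_sumr.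
  by apply: eq_bigr => k _; ring.
have -> : Rintegral mu Om (fun x => (\sum_(l < Nb) phi l x * a l) * (\sum_(k < Nb) phi k x * b k)) = Rintegral mu Om (fun x => \sum_(l < Nb) \sum_(k < Nb) (a l * b k) * (phi l x * phi k x)).
  by apply: eq_Rintegral => x _; exact: E.
rewrite (@Rint_big _ _ (fun l x => \sum_(k < Nb) (a l * b k) * (phi l x * phi k x)) _).2; last first.
  move=> l; exact: (@Rint_big _ _ (fun k x => (a l * b k) * (phi l x * phi k x)) (fun k => int_cpp _ _ _)).1.
apply: eq_bigr => l _.
rewrite (@Rint_big _ _ (fun k x => (a l * b k) * (phi l x * phi k x)) (fun k => int_cpp _ _ _)).2.
under eq_bigr do rewrite Rint_cpp.
exact: (sum_delta' (fun k => a l * b k) l).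
Qed.

Lemma phiE (k : 'I_Nb) x : phi k x = \sum_(l < Nb) phi l x * ((l : nat) == k)%:R.
Proof. by rewrite (sum_delta (fun l : 'I_Nb => phi l x)). Qed.

Lemma Rint_comb1 (k : 'I_Nb) (b : 'I_Nb -> R) :
  l2ip mu Om (phi k) (fun x => \sum_(l < Nb) phi l x * b l) = b k.
Proof.
rewrite /l2ip.
have -> : Rintegral mu Om (fun x => phi k x * (\sum_(l < Nb) phi l x * b l)) = Rintegral mu Om (fun x => (\sum_(l < Nb) phi l x * ((l : nat) == k)%:R) * (\sum_(l < Nb) phi l x * b l)).
  by apply: eq_Rintegral => x _; rewrite -phiE.
rewrite Rint_comb2.
under eq_bigr do rewrite mulrC.
exact: (sum_delta b k).
Qed.
End Int.

Lemma unit_of_posdef (R : realType) (N : nat) (M Rm : 'M[R]_N) :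
  (forall v : 'rV[R]_N, v != 0 -> 0 < (v *m M *m v^T) 0 0) -> M = Rm^T *m Rm ->
  Rm \in unitmx.
Proof.
move=> pos HM; case: (boolP (Rm \in unitmx)) => // nu.
have : kermx Rm^T != 0 by rewrite kermx_eq0 row_free_unit unitmx_tr.
case/rowV0Pn => v /sub_kermxP vK v0.
have := pos v v0; rewrite HM !mulmxA vK !mul0mx mxE ltxx //.
Qed.

Lemma cos_ident (R : realType) (tau w : R) (j k : nat) :
  cosf ((j + k)%N%:R * tau) w + cosf ((j - k + (k - j))%N%:R * tau) w =
  2%:R * cosf (j%:R * tau) w * cosf (k%:R * tau) w.
Proof.
rewrite /cosf natrD !mulrDl cosD.
have [jk|kj] := leqP j k.
  rewrite (_ : (j - k + (k - j))%N = (k - j)%N); last by lia.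
  rewrite natrB // !mulrBl cosB; ring.
rewrite (_ : (j - k + (k - j))%N = (j - k)%N); last by lia.
rewrite natrB ?(ltnW kj) // !mulrBl cosB; ring.
Qed.

Section Main.
Variables (R : realType) (disp : measure_display) (T : measurableType disp).
Variable (mu : {measure set T -> \bar R}) (Om : set T).
Hypothesis mOm : measurable Om.
Variables (Nb : nat) (theta : nat -> R) (phi : nat -> T -> R).
Hypothesis horth : forall l k, mu.-integrable Om (fun x => (phi l x * phi k x)%:E) /\
        l2ip mu Om (phi l) (phi k) = ((l : nat) == k)%:R.
Variables (fhat : R -> R) (m : nat) (xs : 'I_m -> T) (tau : R) (n : nat).

Definition Sm : 'M[R]_(Nb, m) := \matrix_(l, r) (sqfhat fhat (theta l) * phi l (xs r)).
Definition CS (k : nat) : 'M[R]_(Nb, m) :=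
  \matrix_(l, r) (cosf (k%:R * tau) (theta l) * Sm l r).
Definition Bm : 'M[R]_(Nb, \sum_(j < n) m) := \mxrow_(k < n) CS k.
Definition Phi (x : T) : 'rV[R]_Nb := \row_l phi l x.

Lemma l2ip_ext f g g' : (forall x, g x = g' x) -> l2ip mu Om f g = l2ip mu Om f g'.
Proof. by move=> e; apply: eq_Rintegral => x _; rewrite e. Qed.

Lemma sensorE s x : sensor_fun Nb theta phi fhat xs s x = \sum_(l < Nb) phi l x * Sm l s.
Proof. by apply: eq_bigr => l _; rewrite mxE; ring. Qed.

Lemma ip_sensor (l : 'I_Nb) s : l2ip mu Om (phi l) (sensor_fun Nb theta phi fhat xs s) = Sm l s.
Proof. rewrite (@l2ip_ext _ _ _ (sensorE s)); exact: Rint_comb1. Qed.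

Lemma snapE k x : snap mu Om Nb theta phi fhat xs tau k x = Phi x *m CS k.
Proof.
apply/rowP => s; rewrite !mxE /spec_apply; apply: eq_bigr => l _.
by rewrite ip_sensor !mxE; ring.
Qed.

Lemma dataE k : data mu Om Nb theta phi fhat xs tau k = Sm^T *m CS k.
Proof.
apply/matrixP => r s; rewrite !mxE.
have -> : Rintegral mu Om (fun x => deltaf Nb theta phi fhat xs x 0 r *
     snap mu Om Nb theta phi fhat xs tau k x 0 s) =
   Rintegral mu Om (fun x => (\sum_(l < Nb) phi l x * Sm l r) * (\sum_(l < Nb) phi l x * CS k l s)).
  apply: eq_Rintegral => x _; rewrite snapE !mxE sensorE; congr (_ * _).
  by apply: eq_bigr => l _; rewrite !mxE.
rewrite Rint_comb2 //; apply: eq_bigr => l _; by rewrite !mxE.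
Qed.

Lemma massE : mass mu Om Nb theta phi fhat xs tau n = Bm^T *m Bm.
Proof.
rewrite /mass /Bm tr_mxrow mul_mxcol_mxrow; apply: eq_mxblock => j k.
rewrite !dataE; apply/matrixP => r s; rewrite !mxE -big_split mulr_sumr /=.
apply: eq_bigr => l _; rewrite !mxE.
have h := @cos_ident R tau (theta l) j k.
set c1 := cosf _ _ in h *; set c2 := cosf _ _ in h *.
rewrite (_ : c2 = 2%:R * cosf (j%:R * tau) (theta l) * cosf (k%:R * tau) (theta l) - c1); last by rewrite -h; ring.
by field.
Qed.

Lemma UmatE x : Umat mu Om Nb theta phi fhat xs tau n x = Phi x *m Bm.
Proof. by rewrite /Umat /Bm mul_mxrow; apply: eq_mxrow => k; rewrite snapE. Qed.

Variables (Rm : 'M[R]_(\sum_(j < n) m)) (w : 'rV[R]_(\sum_(j < n) m)).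
Definition Zm := Bm *m (invmx Rm *m w^T).

Lemma psfE x : (Vmat mu Om Nb theta phi fhat xs tau Rm x *m w^T) 0 0 = \sum_(l < Nb) phi l x * Zm l 0.
Proof.
rewrite /Vmat UmatE -!mulmxA mxE; apply: eq_bigr => l _; by rewrite mxE.
Qed.

Lemma gwaveE Nbo thetao phio Rmo y (j : nat) s :
  Vomat mu Om Nbo thetao phio fhat xs tau Rmo y = w ->
  gwave mu Om Nb theta phi Nbo thetao phio fhat xs tau Rm Rmo (j%:R * tau) (xs s) y
  = \sum_(l < Nb) CS j l s * Zm l 0.
Proof.
move=> wE; rewrite /gwave /spec_apply; apply: eq_bigr => l _.
rewrite (@l2ip_ext _ _ (fun x => \sum_(l < Nb) phi l x * Zm l 0)); last first.
  by move=> x; rewrite /psf_rom wE psfE.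
by rewrite (@Rint_comb1 _ _ _ _ _ mOm _ _ horth) /CS /Sm !mxE; ring.
Qed.
End Main.

Theorem proposition1 (R : realType) (disp : measure_display) (T : measurableType disp)
  (mu : {measure set T -> \bar R}) (Om : set T)
  (Nb : nat) (theta : nat -> R) (phi : nat -> T -> R)
  (Nbo : nat) (thetao : nat -> R) (phio : nat -> T -> R)
  (fhat : R -> R) (m : nat) (xs : 'I_m -> T) (tau : R) (n : nat) (y : T)
  (Rm Rmo : 'M[R]_(\sum_(j < n) m)) :
  measurable Om ->
  eigen_data mu Om theta phi ->
  eigen_data mu Om thetao phio ->
  (forall w, 0 <= fhat w) ->
  (forall l, (Nb <= l)%N -> fhat (Num.sqrt (theta l)) = 0) ->
  (forall l, (Nbo <= l)%N -> fhat (Num.sqrt (thetao l)) = 0) ->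
  (forall s, Om (xs s)) ->
  (1 <= n)%N -> 0 < tau -> Om y ->
  sym_posdef (mass mu Om Nb theta phi fhat xs tau n) ->
  mass mu Om Nb theta phi fhat xs tau n = Rm^T *m Rm ->
  block_upper Rm ->
  sym_posdef (mass mu Om Nbo thetao phio fhat xs tau n) ->
  mass mu Om Nbo thetao phio fhat xs tau n = Rmo^T *m Rmo ->
  block_upper Rmo ->
  forall j : 'I_n,
    \row_(s < m) gwave mu Om Nb theta phi Nbo thetao phio fhat xs tau Rm Rmo
                   (j%:R * tau) (xs s) y
    = Vomat mu Om Nbo thetao phio fhat xs tau Rmo y *m Rm *m eblock R m j.
Proof.
move=> mOm [_ _ _ _ horth] _ _ _ _ _ _ _ _ [_ pos] HM _ _ _ _ j.
have uR : Rm \in unitmx := @unit_of_posdef _ _ _ _ pos HM.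
set w := Vomat mu Om Nbo thetao phio fhat xs tau Rmo y.
set Z := Zm R disp T Nb theta phi fhat m xs tau n Rm w.
transitivity (Z^T *m CS R disp T Nb theta phi fhat m xs tau j).
  apply/rowP => s; rewrite !mxE (@gwaveE _ _ _ mu Om mOm Nb theta phi horth fhat m xs tau n Rm w Nbo thetao phio Rmo y j s erefl).
  by apply: eq_bigr => l _; rewrite !mxE mulrC.
have CSj : CS R disp T Nb theta phi fhat m xs tau j = Bm R disp T Nb theta phi fhat m xs tau n *m eblock R m j.
  by rewrite /eblock mul_submxrow mulmx1 /Bm mxrowK.
clearbody w.
rewrite CSj /Z /Zm trmx_mul trmx_mul trmxK.
rewrite mulmxA -(mulmxA _ _ (Bm _ _ _ _ _ _ _ _ _ _ _)).
rewrite -(@massE R disp T mu Om mOm Nb theta phi horth fhat m xs tau n) HM.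
by rewrite mulmxA -(mulmxA w (invmx Rm)^T) -trmx_mul mulmxV // trmx1 mulmx1.
Qed.
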